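(* In the public goods model with $k\ge n$, for any $\alpha\in(0,1]$, any allocation that satisfies $\alpha$-Prop satisfies $\frac{\alpha}{n}$-RRS. This is tight: there is an instance with $n=2$ agents and an allocation satisfying Prop ($\alpha=1$) under which some agent $i$ receives exactly $\frac1n\mathrm{RRS}_i>0$.
   Context: Public goods model: agents $[n]$, goods $G=[m]$, integer $0\le k\le m$, nonnegative integer additive values $v_{ij}$, $v_i(S)=\sum_{j\in S}v_{ij}$; an allocation is $x\subseteq G$ with $|x|\le k$. $\mathrm{Prop}_i=\frac1n\max_{|y|\le k}v_i(y)$, $\mathrm{RRS}_i=\max_{|y|\le\lfloor k/n\rfloor}v_i(y)$. $x$ is $\beta$-Prop if $v_i(x)\ge\beta\,\mathrm{Prop}_i$ for all $i$, and $\beta$-RRS if $v_i(x)\ge\beta\,\mathrm{RRS}_i$ for all $i$. *)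

(* Defs.v *)
From mathcomp Require Import all_boot all_order all_algebra.
Set Implicit Arguments. Unset Strict Implicit. Unset Printing Implicit Defensive.
Import Order.TTheory GRing.Theory Num.Theory.

Definition util (n m : nat) (v : 'I_n -> 'I_m -> nat) (i : 'I_n) (S : {set 'I_m}) : nat :=
  \sum_(j in S) v i j.

Definition feasible (m k : nat) (x : {set 'I_m}) : bool := #|x| <= k.

Definition maxval (n m : nat) (v : 'I_n -> 'I_m -> nat) (i : 'I_n) (b : nat) : nat :=
  \max_(y : {set 'I_m} | #|y| <= b) util v i y.

Local Open Scope ring_scope.

Definition Prop_share (n m k : nat) (v : 'I_n -> 'I_m -> nat) (i : 'I_n) : rat :=
  (maxval v i k)%:R / n%:R.

Definition RRS (n m k : nat) (v : 'I_n -> 'I_m -> nat) (i : 'I_n) : rat :=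
  (maxval v i (k %/ n)%N)%:R.

Definition beta_Prop (n m k : nat) (v : 'I_n -> 'I_m -> nat) (beta : rat)
  (x : {set 'I_m}) : Prop :=
  forall i : 'I_n, (util v i x)%:R >= beta * Prop_share k v i.

Definition beta_RRS (n m k : nat) (v : 'I_n -> 'I_m -> nat) (beta : rat)
  (x : {set 'I_m}) : Prop :=
  forall i : 'I_n, (util v i x)%:R >= beta * RRS k v i.

(* Main.v *)
Require Import Defs.
From mathcomp Require Import all_boot all_order all_algebra.
Import Order.TTheory GRing.Theory Num.Theory.
Local Open Scope ring_scope.

Lemma maxval_mono (n m : nat) (v : 'I_n -> 'I_m -> nat) i a b :
  (a <= b)%N -> (maxval v i a <= maxval v i b)%N.
Proof.
move=> ab; rewrite /maxval; apply/bigmax_leqP => y hy.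
by apply: leq_bigmax_cond; apply: leq_trans hy ab.
Qed.

Lemma maxval_ex (i : 'I_2) b : (2 <= b)%N ->
  maxval (fun (_ : 'I_2) (_ : 'I_2) => 1%N) i b = 2%N.
Proof.
move=> hb; apply/eqP; rewrite eqn_leq; apply/andP; split.
  apply/bigmax_leqP => y _; rewrite /util sum1_card.
  by have := max_card y; rewrite card_ord.
have e : util (fun (_ : 'I_2) (_ : 'I_2) => 1%N) i setT = 2%N.
  by rewrite /util sum1_card cardsT card_ord.
rewrite -[X in (X <= _)%N]e.
by apply: leq_bigmax_cond; rewrite cardsT card_ord.
Qed.

Theorem lemma3 :
  (forall (n m k : nat) (v : 'I_n -> 'I_m -> nat) (alpha : rat) (x : {set 'I_m}),
      (0 < n)%N -> (n <= k)%N -> 0 < alpha -> alpha <= 1 ->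
      feasible k x -> beta_Prop k v alpha x ->
      beta_RRS k v (alpha / n%:R) x)
  /\
  (exists (m k : nat) (v : 'I_2 -> 'I_m -> nat) (x : {set 'I_m}),
      [/\ (2 <= k)%N, feasible k x, beta_Prop k v 1 x &
          exists i : 'I_2, 0 < RRS k v i /\ (util v i x)%:R = RRS k v i / 2%:R]).
Proof.
split.
  move=> n m k v alpha x n0 nk a0 a1 _ hP i.
  apply: le_trans (hP i).
  rewrite /RRS /Prop_share.
  set A := (maxval v i (k %/ n)%N)%:R : rat.
  set B := (maxval v i k)%:R : rat.
  have AB : A <= B by rewrite ler_nat; apply: maxval_mono; apply: leq_div.
  have -> : alpha / n%:R * A = alpha * (A / n%:R) by rewrite mulrAC mulrA.
  apply: ler_wpM2l; first exact: ltW.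
  by apply: ler_wpM2r; first by rewrite invr_ge0 ler0n.
exists 2%N, 4%N, (fun _ _ => 1%N), [set ord0].
have hu : forall i : 'I_2, util (fun (_ : 'I_2) (_ : 'I_2) => 1%N) i [set ord0] = 1%N.
  by move=> i; rewrite /util sum1_card cards1.
split; first by [].
- by rewrite /feasible cards1.
- by move=> i; rewrite hu /Prop_share maxval_ex // divff.
- by exists ord0; rewrite /RRS hu maxval_ex.
Qed.
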